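(* Let $U$ be a $\times_A$-Hopf algebra, $M$ a left and $P$ a right $U$-module. Let $M\otimes_AP$ denote $M\otimes_kP$ modulo the span of $m\lhd a\otimes p-m\otimes a\blacktriangleright p$ ($a\in A$). Then: (1) the formula $(m\otimes p)u:=u_-m\otimes pu_+$ ($u\in U$) is a well-defined right $U$-module structure on $M\otimes_AP$; denote the resulting right $U$-module by $M\otimes P$; (2) for every left $U$-module $N$, the canonical isomorphism of $A$-bimodules $(M\otimes N)\otimes_AP\cong M\otimes_A(N\otimes_AP)$ is an isomorphism of right $U$-modules $(M\otimes N)\otimes P\cong M\otimes(N\otimes P)$; (3) for every left $U$-module $N$, the tensor flip $(M\otimes P)\otimes_UN\to P\otimes_U(N\otimes M)$, $m\otimes p\otimes n\mapsto p\otimes n\otimes m$, is a well-defined isomorphism of $k$-modules.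
   Context: $k$ commutative ring, $A$ a $k$-algebra, $A^e=A\otimes_kA^{\mathrm{op}}$; an $A^e$-algebra is a $k$-algebra $U$ with $\eta:A^e\to U$; left $U$-modules are $A$-bimodules via $a\rhd m\lhd b=\eta(a\otimes b)m$, right $U$-modules via $a\blacktriangleright n\blacktriangleleft b=n\eta(b\otimes a)$. $U\otimes_AU$ is the tensor product of $U_\lhd$ and ${}_\rhd U$; $U\times_AU$ is the subset of $\sum u_i\otimes v_i$ with $\sum a\blacktriangleright u_i\otimes v_i=\sum u_i\otimes v_i\blacktriangleleft a$ for all $a$. A $\times_A$-bialgebra is an $A^e$-algebra $U$ with $A^e$-algebra maps $\hat\Delta:U\to U\times_AU$, $\hat\varepsilon:U\to\mathrm{End}_k(A)$ making $U$, via $\Delta(u)=u_{(1)}\otimes u_{(2)}$ and $\varepsilon(u)=\hat\varepsilon(u)(1)$, a coalgebra in $A$-bimodules. For left $U$-modules $M,N$, $M\otimes N$ is $M\otimes_AN$ (tensor of $M_\lhd$ and ${}_\rhd N$) with $u(m\otimes n)=u_{(1)}m\otimes u_{(2)}n$. The Galois map is $\beta:{}_\blacktriangleright U\otimes_{A^{\mathrm{op}}}U_\lhd\to U_\lhd\otimes_A{}_\rhd U$, $u\otimes v\mapsto u_{(1)}\otimes u_{(2)}v$, where ${}_\blacktriangleright U\otimes_{A^{\mathrm{op}}}U_\lhd$ is $U\otimes_kU$ modulo $a\blacktriangleright u\otimes v-u\otimes v\lhd a$; $U$ is a $\times_A$-Hopf algebra if $\beta$ is bijective, and $u_+\otimes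 u_-:=\beta^{-1}(u\otimes1)$. *)

(* Defs.v *)
(* Hopf algebroids (x_A-Hopf algebras) with tensor products
   encoded as formal sums (seq of pairs/triples) modulo the equivalence
   "all balanced multi-additive maps into any abelian group agree". *)
From HB Require Import structures.
From mathcomp Require Import all_boot all_algebra.
Set Implicit Arguments. Unset Strict Implicit. Unset Printing Implicit Defensive.
Import GRing.Theory.
Local Open Scope ring_scope.

Section Tensor2.
Variables (I : Type) (M N : zmodType) (rM : I -> M -> M) (lN : I -> N -> N).

Definition balanced2 (V : zmodType) (f : M -> N -> V) : Prop :=
  [/\ forall m1 m2 n, f (m1 + m2) n = f m1 n + f m2 n,
      forall m n1 n2, f m (n1 + n2) = f m n1 + f m n2 &
      forall i m n, f (rM i m) n = f m (lN i n)].

Definition teq (x y : seq (M * N)) : Prop :=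
  forall (V : zmodType) (f : M -> N -> V), balanced2 f ->
    \sum_(q <- x) f q.1 q.2 = \sum_(q <- y) f q.1 q.2.
End Tensor2.

Section Tensor3.
Variables (M N P : zmodType).

Definition triadditive (V : zmodType) (f : M -> N -> P -> V) : Prop :=
  [/\ forall m1 m2 n p, f (m1 + m2) n p = f m1 n p + f m2 n p,
      forall m n1 n2 p, f m (n1 + n2) p = f m n1 p + f m n2 p &
      forall m n p1 p2, f m n (p1 + p2) = f m n p1 + f m n p2].

Definition teq3 (bal : forall V : zmodType, (M -> N -> P -> V) -> Prop)
  (x y : seq (M * N * P)) : Prop :=
  forall (V : zmodType) (f : M -> N -> P -> V), triadditive f -> bal V f ->
    \sum_(q <- x) f q.1.1 q.1.2 q.2 = \sum_(q <- y) f q.1.1 q.1.2 q.2.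
End Tensor3.

Section HopfAlgebroid.
Variables (k : comPzRingType) (A U : algType k).
(* eta : A^e -> U is encoded by s a := eta (a (x) 1), t b := eta (1 (x) b) *)
Variables (s t : A -> U).
(* Delta u is represented by a formal sum  u_(1) (x) u_(2)  *)
Variable (D : U -> seq (U * U)).
Variable (eps : U -> A -> A).

Definition Ae_algebra : Prop :=
  ((forall a b, s (a + b) = s a + s b) /\ (forall a b, s (a * b) = s a * s b) /\
   s 1 = 1 /\ (forall (c : k) a, s (c *: a) = c *: s a)) /\
  ((forall a b, t (a + b) = t a + t b) /\ (forall a b, t (a * b) = t b * t a) /\
   t 1 = 1 /\ (forall (c : k) a, t (c *: a) = c *: t a)) /\
  (forall a b, s a * t b = t b * s a).

(* U_<| (x)_A |>U :  u <| a = t(a) u,  a |> v = s(a) v *)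
Definition teqUU := teq (fun a (x : U) => t a * x) (fun a (y : U) => s a * y).

Definition balUUU (V : zmodType) (f : U -> U -> U -> V) : Prop :=
  (forall a x y z, f (t a * x) y z = f x (s a * y) z) /\
  (forall a x y z, f x (t a * y) z = f x y (s a * z)).

Definition bialgebroid : Prop :=
  [/\ Ae_algebra,
      (* Delta lands in the Takeuchi product U x_A U *)
      (forall u a, teqUU [seq (q.1 * t a, q.2) | q <- D u]
                         [seq (q.1, q.2 * s a) | q <- D u]),
      (forall u v, teqUU (D (u + v)) (D u ++ D v))
      /\ (forall (c : k) u, teqUU (D (c *: u)) [seq (c *: q.1, q.2) | q <- D u])
      /\ (forall u v, teqUU (D (u * v)) [seq (q.1 * r.1, q.2 * r.2) | q <- D u, r <- D v])
      /\ (forall a b, teqUU (D (s a * t b)) [:: (s a, t b)]),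
      (forall u x y, eps u (x + y) = eps u x + eps u y)
      /\ (forall u (c : k) x, eps u (c *: x) = c *: eps u x)
      /\ (forall u v x, eps (u + v) x = eps u x + eps v x)
      /\ (forall (c : k) u x, eps (c *: u) x = c *: eps u x)
      /\ (forall u v x, eps (u * v) x = eps u (eps v x))
      /\ (forall a b x, eps (s a * t b) x = a * x * b) &
      (forall u, teq3 balUUU
          [seq (r.1, r.2, q.2) | q <- D u, r <- D q.1]
          [seq (q.1, r.1, r.2) | q <- D u, r <- D q.2])
      /\ (forall u, \sum_(q <- D u) s (eps q.1 1) * q.2 = u)
      /\ (forall u, \sum_(q <- D u) t (eps q.2 1) * q.1 = u)].

(* domain of the Galois map:  |>U (x)_{A^op} U_<| ,  a |> u (x) v = u (x) v <| a *)
Definition teqGal := teq (fun a (x : U) => x * t a) (fun a (y : U) => t a * y).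

Definition beta (x : seq (U * U)) : seq (U * U) :=
  [seq (r.1, r.2 * q.2) | q <- x, r <- D q.1].

Definition hopf_algebroid : Prop :=
  [/\ bialgebroid,
      (forall x y, teqUU (beta x) (beta y) -> teqGal x y) &
      (forall z, exists x, teqUU (beta x) z)].

(* x represents u_+ (x) u_- = beta^{-1}(u (x) 1) *)
Definition hrep (u : U) (x : seq (U * U)) : Prop := teqUU (beta x) [:: (u, 1)].

(* right U-modules are left U^c-modules *)
Definition ract (P : lmodType U^c) (p : P) (u : U) : P := (u : U^c) *: p.

Section Modules.
Variables (M N : lmodType U) (P : lmodType U^c).

(* M_<| (x)_A |>P :  m <| a (x) p = m (x) a |> p,  m <| a = t(a) m,  a |> p = p t(a) *)
Definition teqMP := teq (fun a (m : M) => t a *: m) (fun a (p : P) => ract p (t a)).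

(* (m (x) p) u := u_- m (x) p u_+, computed from a representative x of u_+ (x) u_- *)
Definition actT (x : seq (U * U)) (z : seq (M * P)) : seq (M * P) :=
  [seq (q.2 *: r.1, ract r.2 q.1) | r <- z, q <- x].

(* (M (x)_A N) (x)_A P  =  M (x)_A (N (x)_A P)  as triples *)
Definition balMNP (V : zmodType) (f : M -> N -> P -> V) : Prop :=
  (forall a m n p, f (t a *: m) n p = f m (s a *: n) p) /\
  (forall a m n p, f m (t a *: n) p = f m n (ract p (t a))).

(* right action on (M (x) N) (x) P :  ((m (x) n) (x) p) u = (u_-)_(1) m (x) (u_-)_(2) n (x) p u_+ *)
Definition act_left (x : seq (U * U)) (z : seq (M * N * P)) : seq (M * N * P) :=
  [seq (qr.2.1 *: w.1.1, qr.2.2 *: w.1.2, ract w.2 qr.1.1)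
   | w <- z, qr <- [seq (q, r) | q <- x, r <- D q.2]].

(* right action on M (x) (N (x) P) : (m (x) (n (x) p)) u = u_- m (x) (u_+)_- n (x) p (u_+)_+,
   where g v represents v_+ (x) v_- *)
Definition act_right (g : U -> seq (U * U)) (x : seq (U * U)) (z : seq (M * N * P))
  : seq (M * N * P) :=
  [seq (qr.1.2 *: w.1.1, qr.2.2 *: w.1.2, ract w.2 qr.2.1)
   | w <- z, qr <- [seq (q, r) | q <- x, r <- g q.1]].

(* (M (x) P) (x)_U N  as triples (m, p, n) *)
Definition balMP_N (V : zmodType) (f : M -> P -> N -> V) : Prop :=
  (forall a m p n, f (t a *: m) p n = f m (ract p (t a)) n) /\
  (forall u x m p n, hrep u x ->
     \sum_(q <- x) f (q.2 *: m) (ract p q.1) n = f m p (u *: n)).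

(* P (x)_U (N (x) M)  as triples (p, n, m) *)
Definition balP_NM (V : zmodType) (f : P -> N -> M -> V) : Prop :=
  (forall a p n m, f p (t a *: n) m = f p n (s a *: m)) /\
  (forall u p n m, f (ract p u) n m = \sum_(q <- D u) f p (q.1 *: n) (q.2 *: m)).

Definition flip (z : seq (M * P * N)) : seq (P * N * M) :=
  [seq (w.1.2, w.2, w.1.1) | w <- z].
End Modules.
End HopfAlgebroid.

(* Main.v *)
Require Import Defs.
From mathcomp Require Import all_boot all_algebra.
From Stdlib Require Import IndefiniteDescription.
Set Implicit Arguments. Unset Strict Implicit. Unset Printing Implicit Defensive.
Import GRing.Theory.
Local Open Scope ring_scope.

Section Hopf.
Variables (k : comPzRingType) (A U : algType k) (s t : A -> U).
Variables (D : U -> seq (U * U)) (eps : U -> A -> A).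
Hypothesis HH : hopf_algebroid s t D eps.

Definition UUb (V : zmodType) (h : U -> U -> V) :=
  balanced2 (fun a (x : U) => t a * x) (fun a (y : U) => s a * y) h.
Definition Gb (V : zmodType) (h : U -> U -> V) :=
  balanced2 (fun a (x : U) => x * t a) (fun a (y : U) => t a * y) h.

Lemma HAe : Ae_algebra s t.
Proof. by case: HH => -[]. Qed.
Lemma HBi : bialgebroid s t D eps.
Proof. by case: HH. Qed.
Lemma s_add a b : s (a + b) = s a + s b. Proof. by case: HAe => -[]. Qed.
Lemma s_mul a b : s (a * b) = s a * s b. Proof. by case: HAe => -[_ []]. Qed.
Lemma s_1 : s 1 = 1. Proof. by case: HAe => -[_ [_ []]]. Qed.
Lemma s_Z c a : s (c *: a) = c *: s a. Proof. by case: HAe => -[_ [_ []]]. Qed.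
Lemma t_add a b : t (a + b) = t a + t b. Proof. by case: HAe => _ [] []. Qed.
Lemma t_mul a b : t (a * b) = t b * t a. Proof. by case: HAe => _ [] [_ []]. Qed.
Lemma t_1 : t 1 = 1. Proof. by case: HAe => _ [] [_ [_ []]]. Qed.
Lemma t_Z c a : t (c *: a) = c *: t a. Proof. by case: HAe => _ [] [_ [_ []]]. Qed.
Lemma st_comm a b : s a * t b = t b * s a. Proof. by case: HAe => _ []. Qed.

Lemma Htak u a : teqUU s t [seq (q.1 * t a, q.2) | q <- D u] [seq (q.1, q.2 * s a) | q <- D u].
Proof. by case: HBi => _ T _ _ _. Qed.
Lemma HDadd u v : teqUU s t (D (u + v)) (D u ++ D v).
Proof. by case: HBi => _ _ [T _] _ _. Qed.
Lemma HDmul u v : teqUU s t (D (u * v)) [seq (q.1 * r.1, q.2 * r.2) | q <- D u, r <- D v].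
Proof. by case: HBi => _ _ [_ [_ [T _]]] _ _. Qed.
Lemma HDst a b : teqUU s t (D (s a * t b)) [:: (s a, t b)].
Proof. by case: HBi => _ _ [_ [_ [_ T]]] _ _. Qed.
Lemma Hcoass u : teq3 (balUUU s t)
          [seq (r.1, r.2, q.2) | q <- D u, r <- D q.1]
          [seq (q.1, r.1, r.2) | q <- D u, r <- D q.2].
Proof. by case: HBi => _ _ _ _ [T _]. Qed.
Lemma Hinj x y : teqUU s t (beta D x) (beta D y) -> teqGal t x y.
Proof. by case: HH => _ T _; apply: T. Qed.
Lemma Hsurj z : exists x, teqUU s t (beta D x) z.
Proof. by case: HH => _ _ T; apply: T. Qed.

Section Sums.
Variables (V : zmodType) (h : U -> U -> V).
Hypothesis hb : UUb h.
Let h1 : forall x y z, h (x + y) z = h x z + h y z. Proof. by case: hb. Qed.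
Let h2 : forall x y z, h x (y + z) = h x y + h x z. Proof. by case: hb. Qed.
Let h3 : forall a x y, h (t a * x) y = h x (s a * y). Proof. by case: hb. Qed.

Lemma sumD_add u v : \sum_(q <- D (u + v)) h q.1 q.2 =
  \sum_(q <- D u) h q.1 q.2 + \sum_(q <- D v) h q.1 q.2.
Proof. by rewrite (HDadd _ _ hb) big_cat. Qed.

Lemma sumD_mul u v : \sum_(q <- D (u * v)) h q.1 q.2 =
  \sum_(q <- D u) \sum_(r <- D v) h (q.1 * r.1) (q.2 * r.2).
Proof. by rewrite (HDmul _ _ hb) big_allpairs_dep. Qed.

Lemma sumD_st a b : \sum_(q <- D (s a * t b)) h q.1 q.2 = h (s a) (t b).
Proof. by rewrite (HDst _ _ hb) big_seq1. Qed.

Lemma tak u a : \sum_(q <- D u) h (q.1 * t a) q.2 = \sum_(q <- D u) h q.1 (q.2 * s a).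
Proof. by have := Htak u a hb; rewrite !big_map. Qed.
End Sums.

Lemma UUb_rmul (V : zmodType) (h : U -> U -> V) (c d : U) : UUb h -> UUb (fun x y => h (x * c) (y * d)).
Proof.
case=> h1 h2 h3; split=> [x y z|x y z|a x y]; first by rewrite mulrDl h1.
  by rewrite mulrDl h2.
by rewrite -!mulrA h3.
Qed.

Lemma UUb_rsum (V : zmodType) (h : U -> U -> V) (l : seq (U * U)) : UUb h ->
  UUb (fun x y => \sum_(r <- l) h (x * r.1) (y * r.2)).
Proof.
move=> hb; case: (hb) => h1 h2 h3; split=> [x y z|x y z|a x y].
- by rewrite -big_split; apply: eq_bigr => r _; rewrite mulrDl h1.
- by rewrite -big_split; apply: eq_bigr => r _; rewrite mulrDl h2.
- by apply: eq_bigr => r _; rewrite -!mulrA h3.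
Qed.

Lemma UUb_lsum (V : zmodType) (h : U -> U -> V) (u : U) : UUb h ->
  UUb (fun x y => \sum_(q <- D u) h (q.1 * x) (q.2 * y)).
Proof.
move=> hb; case: (hb) => h1 h2 h3; split=> [x y z|x y z|a x y].
- by rewrite -big_split; apply: eq_bigr => r _; rewrite mulrDr h1.
- by rewrite -big_split; apply: eq_bigr => r _; rewrite mulrDr h2.
- have := tak (UUb_rmul x y hb) u a => /=.
  by under eq_bigr do rewrite -mulrA; under [RHS]eq_bigr do rewrite -mulrA.
Qed.

Section Derived.
Variables (V : zmodType) (h : U -> U -> V).
Hypothesis hb : UUb h.

Lemma sumD_1 : \sum_(q <- D 1) h q.1 q.2 = h 1 1.
Proof. by have := sumD_st hb 1 1; rewrite s_1 t_1 mulr1. Qed.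
Lemma sumD_t a : \sum_(q <- D (t a)) h q.1 q.2 = h 1 (t a).
Proof. by have := sumD_st hb 1 a; rewrite s_1 mul1r. Qed.
Lemma sumD_s a : \sum_(q <- D (s a)) h q.1 q.2 = h (s a) 1.
Proof. by have := sumD_st hb a 1; rewrite t_1 mulr1. Qed.
End Derived.
Section Derived2.
Variables (V : zmodType) (h : U -> U -> V).
Hypothesis hb : UUb h.

Lemma sumD_mulr u v : \sum_(q <- D (u * v)) h q.1 q.2 =
  \sum_(r <- D v) \sum_(q <- D u) h (q.1 * r.1) (q.2 * r.2).
Proof. by rewrite sumD_mul // exchange_big. Qed.

Lemma sumD_tl a u : \sum_(q <- D (t a * u)) h q.1 q.2 = \sum_(q <- D u) h q.1 (t a * q.2).
Proof.
rewrite sumD_mul //; have := sumD_t (UUb_rsum (D u) hb) a => /= ->.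
by apply: eq_bigr => r _; rewrite mul1r.
Qed.
Lemma sumD_sl a u : \sum_(q <- D (s a * u)) h q.1 q.2 = \sum_(q <- D u) h (s a * q.1) q.2.
Proof.
rewrite sumD_mul //; have := sumD_s (UUb_rsum (D u) hb) a => /= ->.
by apply: eq_bigr => r _; rewrite mul1r.
Qed.
Lemma sumD_tr a u : \sum_(q <- D (u * t a)) h q.1 q.2 = \sum_(q <- D u) h q.1 (q.2 * t a).
Proof.
rewrite sumD_mulr; have := sumD_t (UUb_lsum u hb) a => /= ->.
by apply: eq_bigr => r _; rewrite mulr1.
Qed.
Lemma sumD_sr a u : \sum_(q <- D (u * s a)) h q.1 q.2 = \sum_(q <- D u) h (q.1 * s a) q.2.
Proof.
rewrite sumD_mulr; have := sumD_s (UUb_lsum u hb) a => /= ->.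
by apply: eq_bigr => r _; rewrite mulr1.
Qed.
End Derived2.

Lemma UUb_r (V : zmodType) (h : U -> U -> V) (d : U) : UUb h -> UUb (fun x y => h x (y * d)).
Proof.
case=> h1 h2 h3; split=> [x y z|x y z|a x y]; [exact: h1| by rewrite mulrDl h2|].
by rewrite -mulrA h3.
Qed.
Lemma UUb_l (V : zmodType) (h : U -> U -> V) (c : U) : UUb h -> UUb (fun x y => h (x * c) y).
Proof.
case=> h1 h2 h3; split=> [x y z|x y z|a x y]; [by rewrite mulrDl h1|exact: h2|].
by rewrite -mulrA h3.
Qed.

Lemma sum_beta (V : zmodType) (h : U -> U -> V) x :
  \sum_(q <- beta D x) h q.1 q.2 = \sum_(q <- x) \sum_(r <- D q.1) h r.1 (r.2 * q.2).
Proof. by rewrite /beta big_allpairs_dep. Qed.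

Lemma hrepE u x : hrep s t D u x -> forall (V : zmodType) (h : U -> U -> V), UUb h ->
  \sum_(q <- x) \sum_(r <- D q.1) h r.1 (r.2 * q.2) = h u 1.
Proof. by move=> hx V h hb; rewrite -sum_beta (hx _ _ hb) big_seq1. Qed.

Lemma hrepI u x : (forall (V : zmodType) (h : U -> U -> V), UUb h ->
  \sum_(q <- x) \sum_(r <- D q.1) h r.1 (r.2 * q.2) = h u 1) -> hrep s t D u x.
Proof. by move=> H V h hb; rewrite sum_beta big_seq1 H. Qed.

Lemma GInj x y : (forall (V : zmodType) (h : U -> U -> V), UUb h ->
  \sum_(q <- x) \sum_(r <- D q.1) h r.1 (r.2 * q.2) =
  \sum_(q <- y) \sum_(r <- D q.1) h r.1 (r.2 * q.2)) ->
  forall (V : zmodType) (k : U -> U -> V), Gb k -> \sum_(q <- x) k q.1 q.2 = \sum_(q <- y) k q.1 q.2.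
Proof. by move=> H V kk kb; apply: (Hinj _ kb) => W h hb; rewrite !sum_beta H. Qed.

Lemma hrep_uniq u x y : hrep s t D u x -> hrep s t D u y ->
  forall (V : zmodType) (k : U -> U -> V), Gb k -> \sum_(q <- x) k q.1 q.2 = \sum_(q <- y) k q.1 q.2.
Proof. by move=> hx hy; apply: GInj => V h hb; rewrite (hrepE hx) ?(hrepE hy). Qed.

Lemma hrep_1 : hrep s t D 1 [:: (1, 1)].
Proof. by apply: hrepI => V h hb; rewrite big_seq1 /=; under eq_bigr do rewrite mulr1; rewrite sumD_1. Qed.

Lemma hrep_t a : hrep s t D (t a) [:: (1, s a)].
Proof.
apply: hrepI => V h hb; rewrite big_seq1 /= (sumD_1 (UUb_r (s a) hb)) /=.
by case: hb => _ _ h3; rewrite -[t a]mulr1 h3 mulr1 mul1r.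
Qed.

Lemma hrep_add u v x y : hrep s t D u x -> hrep s t D v y -> hrep s t D (u + v) (x ++ y).
Proof.
move=> hx hy; apply: hrepI => V h hb; rewrite big_cat (hrepE hx) // (hrepE hy) //.
by case: hb => ->.
Qed.

Lemma hrep_mul u v x y : hrep s t D u x -> hrep s t D v y ->
  hrep s t D (u * v) [seq (qx.1 * qy.1, qy.2 * qx.2) | qx <- x, qy <- y].
Proof.
move=> hx hy; apply: hrepI => V h hb; rewrite big_allpairs_dep /=.
transitivity (\sum_(qx <- x) \sum_(a <- D qx.1) h (a.1 * v) (a.2 * qx.2)); last first.
  by rewrite (hrepE hx (UUb_l v hb)).
apply: eq_bigr => qx _.
transitivity (\sum_(qy <- y) \sum_(b <- D qy.1)
   \sum_(a <- D qx.1) (fun x0 y0 => h x0 (y0 * qx.2)) (a.1 * b.1) (a.2 * (b.2 * qy.2))).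
  apply: eq_bigr => qy _; rewrite (sumD_mulr (UUb_r (qy.2 * qx.2) hb)) /=.
  by apply: eq_bigr => b _; apply: eq_bigr => a _; rewrite !mulrA.
rewrite (hrepE hy (UUb_lsum _ (UUb_r _ hb))).
by apply: eq_bigr => a _; rewrite mulr1.
Qed.

Lemma UUb_tl (V : zmodType) (h : U -> U -> V) (a : A) : UUb h -> UUb (fun x y => h x (t a * y)).
Proof.
case=> h1 h2 h3; split=> [x y z|x y z|e x y]; [exact: h1| by rewrite mulrDr h2|].
by rewrite h3 !mulrA st_comm.
Qed.

Lemma hrep_tl a u x : hrep s t D u x -> hrep s t D (t a * u) [seq (q.1, q.2 * s a) | q <- x].
Proof.
move=> hx; apply: hrepI => V h hb; rewrite big_map /=.
under eq_bigr do under eq_bigr do rewrite mulrA.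
rewrite (hrepE hx (UUb_r (s a) hb)) mul1r.
by case: hb => _ _ h3; rewrite h3 mulr1.
Qed.

Lemma hrep_tr a u x : hrep s t D u x -> hrep s t D (u * t a) [seq (q.1, s a * q.2) | q <- x].
Proof.
move=> hx; apply: hrepI => V h hb; rewrite big_map /=.
rewrite -(hrepE hx (UUb_l (t a) hb)); apply: eq_bigr => q _ /=.
have := tak (UUb_r q.2 hb) q.1 a => /= ->.
by apply: eq_bigr => r _; rewrite mulrA.
Qed.

Lemma hrep_c (c : k) : hrep s t D (c%:A) [:: (c%:A, 1)].
Proof.
apply: hrepI => V h hb; rewrite big_seq1 /=.
have -> : (c%:A : U) = s (c *: 1) * t 1 by rewrite s_Z s_1 t_1 mulr1.
by rewrite (sumD_st (UUb_r 1 hb)) s_Z s_1 t_1 !mulr1.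
Qed.

Lemma hrep_Gt u x a : hrep s t D u x -> forall (V : zmodType) (kk : U -> U -> V), Gb kk ->
  \sum_(q <- x) kk q.1 (q.2 * t a) = \sum_(q <- x) kk (t a * q.1) q.2.
Proof.
move=> hx V kk kb.
have E : \sum_(q <- [seq (q.1, q.2 * t a) | q <- x]) kk q.1 q.2 =
  \sum_(q <- [seq (t a * q.1, q.2) | q <- x]) kk q.1 q.2; last by move: E; rewrite !big_map.
apply: GInj kb => W h hb; rewrite !big_map /=.
transitivity (h u (t a)).
  under eq_bigr do under eq_bigr do rewrite mulrA.
  by rewrite (hrepE hx (UUb_r (t a) hb)) mul1r.
under eq_bigr do rewrite (sumD_tl (UUb_r _ hb)) /=.
under eq_bigr do under eq_bigr do rewrite -mulrA.
by rewrite (hrepE hx (UUb_tl a hb)) mulr1.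
Qed.

Lemma id36 (g : U -> seq (U * U)) (hg : forall v, hrep s t D v (g v)) u :
  forall (V : zmodType) (kk : U -> U -> V), Gb kk ->
  \sum_(r <- D u) \sum_(y <- g r.1) kk y.1 (y.2 * r.2) = kk u 1.
Proof.
move=> V kk kb.
have E : \sum_(q <- [seq (y.1, y.2 * r.2) | r <- D u, y <- g r.1]) kk q.1 q.2 =
  \sum_(q <- [:: (u, 1)]) kk q.1 q.2; last by move: E; rewrite big_allpairs_dep big_seq1.
apply: GInj kb => W h hb; rewrite big_allpairs_dep big_seq1 /=.
transitivity (\sum_(r <- D u) h r.1 r.2); last by apply: eq_bigr => r _; rewrite mulr1.
apply: eq_bigr => r _ /=; under eq_bigr do under eq_bigr do rewrite mulrA.
by rewrite (hrepE (hg _) (UUb_r r.2 hb)) mul1r.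
Qed.

Lemma hrep_addG u v x y z : hrep s t D u x -> hrep s t D v y -> hrep s t D (u + v) z ->
  forall (V : zmodType) (kk : U -> U -> V), Gb kk ->
  \sum_(q <- z) kk q.1 q.2 = \sum_(q <- x) kk q.1 q.2 + \sum_(q <- y) kk q.1 q.2.
Proof.
move=> hx hy hz V kk kb; rewrite -big_cat; exact: (hrep_uniq hz (hrep_add hx hy) kb).
Qed.

End Hopf.

Section Part1.
Variables (k : comPzRingType) (A U : algType k) (s t : A -> U).
Variables (D : U -> seq (U * U)) (eps : U -> A -> A).
Hypothesis HH : hopf_algebroid s t D eps.

Lemma ractM (P : lmodType U^c) (p : P) (a b : U) : ract p (a * b) = ract (ract p a) b.
Proof. by rewrite /ract scalerA. Qed.
Lemma ract1 (P : lmodType U^c) (p : P) : ract p 1 = p.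
Proof. by rewrite /ract scale1r. Qed.
Lemma ractDr (P : lmodType U^c) (p : P) (a b : U) : ract p (a + b) = ract p a + ract p b.
Proof. by rewrite /ract scalerDl. Qed.
Lemma ractDl (P : lmodType U^c) (p q : P) (a : U) : ract (p + q) a = ract p a + ract q a.
Proof. by rewrite /ract scalerDr. Qed.

Variables (M : lmodType U) (P : lmodType U^c).

Definition MPb (V : zmodType) (f : M -> P -> V) :=
  balanced2 (fun a (m : M) => t a *: m) (fun a (p : P) => ract p (t a)) f.

Lemma Gb_act (V : zmodType) (f : M -> P -> V) m p : MPb f ->
  Gb t (fun a b => f (b *: m) (ract p a)).
Proof.
case=> f1 f2 f3; split=> [x y z|x y z|e x y].
- by rewrite ractDr f2.
- by rewrite scalerDl f1.
- by rewrite ractM -f3 scalerA.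
Qed.

Lemma MPb_act (V : zmodType) (f : M -> P -> V) u x : hrep s t D u x -> MPb f ->
  MPb (fun m p => \sum_(q <- x) f (q.2 *: m) (ract p q.1)).
Proof.
move=> hx fb; case: (fb) => f1 f2 f3; split=> [m1 m2 p|m p1 p2|a m p].
- by rewrite -big_split; apply: eq_bigr => q _; rewrite scalerDr f1.
- by rewrite -big_split; apply: eq_bigr => q _; rewrite ractDl f2.
- have := hrep_Gt HH a hx (Gb_act m p fb) => /=.
  under eq_bigr do rewrite -scalerA.
  by under [in RHS]eq_bigr do rewrite ractM.
Qed.

Lemma sum_actT (V : zmodType) (f : M -> P -> V) x z :
  \sum_(q <- actT x z) f q.1 q.2 = \sum_(r <- z) \sum_(q <- x) f (q.2 *: r.1) (ract r.2 q.1).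
Proof. by rewrite /actT big_allpairs_dep. Qed.

Lemma part1a u x x' (z z' : seq (M * P)) : hrep s t D u x -> hrep s t D u x' ->
  teqMP t z z' -> teqMP t (actT x z) (actT x' z').
Proof.
move=> hx hx' hz V f fb; rewrite !sum_actT.
transitivity (\sum_(r <- z) \sum_(q <- x') f (q.2 *: r.1) (ract r.2 q.1)).
  apply: eq_bigr => r _; exact: (hrep_uniq HH hx hx' (Gb_act r.1 r.2 fb)).
exact: (hz _ _ (MPb_act hx' fb)).
Qed.

Lemma part1b x (z : seq (M * P)) : hrep s t D 1 x -> teqMP t (actT x z) z.
Proof.
move=> hx V f fb; rewrite sum_actT; apply: eq_bigr => r _.
rewrite (hrep_uniq HH hx (hrep_1 HH) (Gb_act r.1 r.2 fb)) big_seq1 /=.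
by rewrite scale1r ract1.
Qed.

Lemma part1c u v x y w (z : seq (M * P)) : hrep s t D u x -> hrep s t D v y ->
  hrep s t D (u * v) w -> teqMP t (actT w z) (actT y (actT x z)).
Proof.
move=> hx hy hw V f fb; rewrite !sum_actT.
rewrite /actT big_allpairs_dep; apply: eq_bigr => r _.
rewrite (hrep_uniq HH hw (hrep_mul HH hx hy) (Gb_act r.1 r.2 fb)) big_allpairs_dep /=.
by apply: eq_bigr => qx _; apply: eq_bigr => qy _; rewrite ractM scalerA.
Qed.

Lemma part1d u v x y w (z : seq (M * P)) : hrep s t D u x -> hrep s t D v y ->
  hrep s t D (u + v) w -> teqMP t (actT w z) (actT x z ++ actT y z).
Proof.
move=> hx hy hw V f fb; rewrite big_cat /= !sum_actT -big_split; apply: eq_bigr => r _.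
exact: (hrep_addG HH hx hy hw (Gb_act r.1 r.2 fb)).
Qed.

Lemma part1e (c : k) x (z : seq (M * P)) : hrep s t D (c%:A) x ->
  teqMP t (actT x z) [seq ((c%:A : U) *: r.1, r.2) | r <- z].
Proof.
move=> hx V f fb; rewrite sum_actT big_map; apply: eq_bigr => r _.
rewrite (hrep_uniq HH hx (hrep_c HH c) (Gb_act r.1 r.2 fb)) big_seq1 /= scale1r.
have -> : (c%:A : U) = t (c *: 1) by rewrite (t_Z HH) (t_1 HH).
by case: fb => _ _ ->.
Qed.
End Part1.

Section Part2.
Variables (k : comPzRingType) (A U : algType k) (s t : A -> U).
Variables (D : U -> seq (U * U)) (eps : U -> A -> A).
Hypothesis HH : hopf_algebroid s t D eps.
Variable (g : U -> seq (U * U)).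
Hypothesis hg : forall v, hrep s t D v (g v).

Variables (V : zmodType) (l : U -> U -> U -> V).
Hypothesis l1 : forall a a' b c, l (a + a') b c = l a b c + l a' b c.
Hypothesis l2 : forall a b b' c, l a (b + b') c = l a b c + l a b' c.
Hypothesis l3 : forall a b c c', l a b (c + c') = l a b c + l a b c'.
Hypothesis lp2 : forall e a b c, l a (t e * b) c = l a b (s e * c).
Hypothesis lp3 : forall e a b c, l (a * t e) b c = l a b (t e * c).

Definition mu a b c (x y : U) := l a (x * b) (y * c).
Lemma mu_b a b c : UUb s t (mu a b c).
Proof.
rewrite /mu; split=> [x y z|x y z|e x y]; first by rewrite mulrDl l2.
  by rewrite mulrDl l3.
by rewrite -!mulrA lp2.
Qed.

Definition Lam b c (x v : U) := \sum_(r <- D v) mu x b c r.1 r.2.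
Lemma Lam_b b c : Gb t (Lam b c).
Proof.
rewrite /Lam; split=> [x y z|x y z|e x y].
- by rewrite -big_split; apply: eq_bigr => r _; rewrite /mu l1.
- exact: (sumD_add HH (mu_b x b c)).
- rewrite (sumD_tl HH (mu_b x b c)); apply: eq_bigr => r _.
  by rewrite /mu lp3 mulrA.
Qed.

Definition l' a b c := \sum_(y <- g a) Lam b c y.1 y.2.

Lemma l'1 a a' b c : l' (a + a') b c = l' a b c + l' a' b c.
Proof. exact: (hrep_addG HH (hg a) (hg a') (hg (a + a')) (Lam_b b c)). Qed.
Lemma l'2 a b b' c : l' a (b + b') c = l' a b c + l' a b' c.
Proof.
rewrite /l' /Lam -big_split; apply: eq_bigr => y _; rewrite -big_split.
by apply: eq_bigr => r _; rewrite /mu mulrDr l2.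
Qed.
Lemma l'3 a b c c' : l' a b (c + c') = l' a b c + l' a b c'.
Proof.
rewrite /l' /Lam -big_split; apply: eq_bigr => y _; rewrite -big_split.
by apply: eq_bigr => r _; rewrite /mu mulrDr l3.
Qed.
Lemma l'p2 e a b c : l' a (t e * b) c = l' a b (s e * c).
Proof.
rewrite /l' /Lam; apply: eq_bigr => y _.
have := tak HH (mu_b y.1 b c) y.2 e; rewrite /mu => E.
under eq_bigr do rewrite mulrA; rewrite E.
by apply: eq_bigr => r _; rewrite mulrA.
Qed.
Lemma l'p1 e a b c : l' (t e * a) b c = l' a (s e * b) c.
Proof.
rewrite /l' (hrep_uniq HH (hg _) (hrep_tl e (hg a)) (Lam_b b c)) big_map /=.
apply: eq_bigr => y _; rewrite /Lam (sumD_sr HH (mu_b y.1 b c)).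
by apply: eq_bigr => r _; rewrite /mu mulrA.
Qed.

Lemma W2 a b c : \sum_(r <- D a) \sum_(r' <- D r.2) l' r.1 (r'.1 * b) (r'.2 * c) = l a b c.
Proof.
transitivity (\sum_(r <- D a) \sum_(y <- g r.1) Lam b c y.1 (y.2 * r.2)); last first.
  rewrite (id36 HH hg a (Lam_b b c)) /Lam (sumD_1 HH (mu_b a b c)) /mu.
  by rewrite !mul1r.
apply: eq_bigr => r _; rewrite /l' exchange_big /=; apply: eq_bigr => y _.
rewrite /Lam (sumD_mul HH (mu_b y.1 b c)) exchange_big /=.
by apply: eq_bigr => r1 _; apply: eq_bigr => r2 _; rewrite /mu !mulrA.
Qed.

Definition nu a (x y : U) := l' a x y.
Lemma nu_b a : UUb s t (nu a).
Proof. by split=> *; [apply: l'2|apply: l'3|apply: l'p2]. Qed.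

Definition kap (x v : U) := \sum_(r <- D v) nu x r.1 r.2.
Lemma kap_b : UUb s t kap.
Proof.
rewrite /kap; split=> [x y z|x y z|e x y].
- by rewrite -big_split; apply: eq_bigr => r _; rewrite /nu l'1.
- exact: (sumD_add HH (nu_b x)).
- rewrite (sumD_sl HH (nu_b x)); apply: eq_bigr => r _.
  by rewrite /nu l'p1.
Qed.

Lemma LHS_val u x : hrep s t D u x ->
  \sum_(q <- x) \sum_(r <- D q.2) l q.1 r.1 r.2 = l' u 1 1.
Proof.
move=> hx.
transitivity (\sum_(q <- x) \sum_(r <- D q.1) kap r.1 (r.2 * q.2)); last first.
  by rewrite (hrepE hx kap_b) /kap (sumD_1 HH (nu_b u)).
apply: eq_bigr => q _.
under eq_bigr do rewrite -W2.
rewrite exchange_big /=; apply: eq_bigr => r _.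
rewrite /kap (sumD_mul HH (nu_b r.1)) exchange_big /=.
by [].
Qed.

Definition om0 q2 v (x y : U) := l' x (y * q2) v.
Lemma om0_b q2 v : UUb s t (om0 q2 v).
Proof.
rewrite /om0; split=> [x y z|x y z|e x y]; first exact: l'1.
  by rewrite mulrDl l'2.
by rewrite l'p1 mulrA.
Qed.
Definition Om q2 (x v : U) := \sum_(r <- D x) om0 q2 v r.1 r.2.
Lemma Om_b q2 : UUb s t (Om q2).
Proof.
rewrite /Om; split=> [x y z|x y z|e x y].
- exact: (sumD_add HH (om0_b q2 z)).
- by rewrite -big_split; apply: eq_bigr => r _; rewrite /om0 l'3.
- rewrite (sumD_tl HH (om0_b q2 y)); apply: eq_bigr => r _.
  by rewrite /om0 -mulrA l'p2.
Qed.
Definition xi (x y : U) := l' x y 1.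
Lemma xi_b : UUb s t xi.
Proof. by rewrite /xi; split=> *; [apply: l'1|apply: l'2|apply: l'p1]. Qed.

Lemma RHS_val u x : hrep s t D u x ->
  \sum_(q <- x) \sum_(y <- g q.1) l y.1 q.2 y.2 = l' u 1 1.
Proof.
move=> hx.
transitivity (\sum_(q <- x) \sum_(r <- D q.1) xi r.1 (r.2 * q.2)); last first.
  by rewrite (hrepE hx xi_b).
apply: eq_bigr => q _.
transitivity (\sum_(y <- g q.1) \sum_(r <- D y.1) Om q.2 r.1 (r.2 * y.2)); last first.
  by rewrite (hrepE (hg q.1) (Om_b q.2)).
apply: eq_bigr => y _; rewrite -W2.
pose Psi (a b c : U) := l' a (b * q.2) (c * y.2).
have := Hcoass HH y.1 (f := Psi); rewrite !big_allpairs_dep /= => <-.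
- by rewrite /Om /om0 /Psi.
- rewrite /Psi; split=> *; first exact: l'1.
    by rewrite mulrDl l'2.
  by rewrite mulrDl l'3.
- rewrite /Psi; split=> *; first by rewrite l'p1 mulrA.
  by rewrite -mulrA l'p2 mulrA.
Qed.

Lemma key u x : hrep s t D u x ->
  \sum_(q <- x) \sum_(r <- D q.2) l q.1 r.1 r.2 =
  \sum_(q <- x) \sum_(y <- g q.1) l y.1 q.2 y.2.
Proof. by move=> hx; rewrite (LHS_val hx) (RHS_val hx). Qed.

End Part2.

Section Part3.
Variables (k : comPzRingType) (A U : algType k) (s t : A -> U).
Variables (D : U -> seq (U * U)) (eps : U -> A -> A).
Hypothesis HH : hopf_algebroid s t D eps.
Variables (M N : lmodType U) (P : lmodType U^c).

Definition gch (v : U) : seq (U * U) :=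
  proj1_sig (constructive_indefinite_description _ (Hsurj HH [:: (v, 1)])).
Lemma gchP v : hrep s t D v (gch v).
Proof. by rewrite /gch; case: constructive_indefinite_description. Qed.

Lemma part3a (z z' : seq (M * P * N)) :
  teq3 (@balMP_N _ _ _ s t D M N P) z z' -> teq3 (@balP_NM _ _ _ s t D M N P) (flip z) (flip z').
Proof.
move=> hz V f [f1 f2 f3] [b1 b2]; rewrite /flip !big_map /=.
pose h p n m (x y : U) := f p (x *: n) (y *: m).
have hb p n m : UUb s t (h p n m).
  split=> [x y w|x y w|a x y]; rewrite /h.
  - by rewrite scalerDl f2.
  - by rewrite scalerDl f3.
  - by rewrite -!scalerA b1.
have := hz V (fun m p n => f p n m); apply.
  by split=> *; [apply: f3|apply: f1|apply: f2].
split=> [a m p n|u x m p n hx].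
  rewrite b2 (sumD_t HH (hb p n m)) /h scale1r.
  by rewrite /ract.
under eq_bigr do rewrite b2.
transitivity (\sum_(q <- x) \sum_(r <- D q.1) h p n m r.1 (r.2 * q.2)).
  by apply: eq_bigr => q _; apply: eq_bigr => r _; rewrite /h scalerA.
by rewrite (hrepE hx (hb p n m)) /h scale1r.
Qed.

Lemma part3b (z z' : seq (M * P * N)) :
  teq3 (@balP_NM _ _ _ s t D M N P) (flip z) (flip z') -> teq3 (@balMP_N _ _ _ s t D M N P) z z'.
Proof.
move=> hz V f [f1 f2 f3] [b1 b2].
have := hz V (fun p n m => f m p n); rewrite /flip !big_map /=; apply.
  by split=> *; [apply: f2|apply: f3|apply: f1].
split=> [a p n m|u p n m].
  rewrite -(b2 _ _ _ _ _ (hrep_t HH a)) big_seq1 /=.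
  by rewrite ract1.
have kb : Gb t (fun x y => f (y *: m) (ract p x) n).
  split=> [x y w|x y w|e x y].
  - by rewrite ractDr f2.
  - by rewrite scalerDl f1.
  - by rewrite ractM -b1 scalerA.
transitivity (\sum_(q <- D u) \sum_(y <- gch q.1) f ((y.2 * q.2) *: m) (ract p y.1) n).
  by rewrite (id36 HH gchP u kb) scale1r.
apply: eq_bigr => q _; rewrite -(b2 _ _ _ _ _ (gchP q.1)).
by apply: eq_bigr => y _; rewrite scalerA.
Qed.

Lemma part3c (w : seq (P * N * M)) :
  exists z, teq3 (@balP_NM _ _ _ s t D M N P) (flip z) w.
Proof.
exists [seq (q.2, q.1.1, q.1.2) | q <- w] => V f _ _.
by rewrite /flip -map_comp; apply: congr_big => //=; rewrite map_id_in // => -[[]].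
Qed.
End Part3.

Theorem lemma3p8 (k : comPzRingType) (A U : algType k) (s t : A -> U)
  (D : U -> seq (U * U)) (eps : U -> A -> A) :
  hopf_algebroid s t D eps ->
  forall (M : lmodType U) (P : lmodType U^c),
  (* (1) (m (x) p) u := u_- m (x) p u_+ is a well-defined right U-module structure *)
  [/\ (forall u x x' (z z' : seq (M * P)), hrep s t D u x -> hrep s t D u x' ->
         teqMP t z z' -> teqMP t (actT x z) (actT x' z')),
      (forall x (z : seq (M * P)), hrep s t D 1 x -> teqMP t (actT x z) z),
      (forall u v x y w (z : seq (M * P)), hrep s t D u x -> hrep s t D v y -> hrep s t D (u * v) w ->
         teqMP t (actT w z) (actT y (actT x z))),
      (forall u v x y w (z : seq (M * P)), hrep s t D u x -> hrep s t D v y -> hrep s t D (u + v) w ->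
         teqMP t (actT w z) (actT x z ++ actT y z)) &
      (forall (c : k) x (z : seq (M * P)), hrep s t D (c%:A) x ->
         teqMP t (actT x z) [seq ((c%:A : U) *: r.1, r.2) | r <- z])]
  (* (2) (M (x) N) (x) P = M (x) (N (x) P) is U-linear *)
  /\ (forall (N : lmodType U) (g : U -> seq (U * U)),
        (forall v, hrep s t D v (g v)) ->
        forall u x (z : seq (M * N * P)), hrep s t D u x ->
          teq3 (@balMNP _ _ _ s t M N P) (act_left D x z) (act_right g x z))
  (* (3) the flip (M (x) P) (x)_U N -> P (x)_U (N (x) M) is a well-defined bijection *)
  /\ (forall N : lmodType U,
        [/\ (forall z z' : seq (M * P * N),
               teq3 (@balMP_N _ _ _ s t D M N P) z z' -> teq3 (@balP_NM _ _ _ s t D M N P) (flip z) (flip z')),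
            (forall z z' : seq (M * P * N),
               teq3 (@balP_NM _ _ _ s t D M N P) (flip z) (flip z') -> teq3 (@balMP_N _ _ _ s t D M N P) z z') &
            (forall w : seq (P * N * M), exists z, teq3 (@balP_NM _ _ _ s t D M N P) (flip z) w)]).
Proof.
move=> HH M P; split; [|split].
- split.
  + exact: (part1a HH).
  + exact: (part1b HH).
  + exact: (part1c HH).
  + exact: (part1d HH).
  + exact: (part1e HH).
- move=> N g hg u x z hx V f [f1 f2 f3] [b1 b2].
  rewrite /act_left /act_right !big_allpairs_dep; apply: eq_bigr => w _.
  rewrite !big_allpairs_dep /=.
  apply: (key HH hg (l := fun a b c => f (b *: w.1.1) (c *: w.1.2) (ract w.2 a))) hx.
  + by move=> *; rewrite ractDr f3.
  + by move=> *; rewrite scalerDl f1.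
  + by move=> *; rewrite scalerDl f2.
  + by move=> *; rewrite -scalerA b1 scalerA.
  + by move=> *; rewrite ractM -b2 scalerA.
- move=> N; split.
  + exact: (part3a HH).
  + exact: (part3b HH).
  + exact: part3c.
Qed.
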